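(* Assume the setting of the context. Let $\delta>0$ and let $\alpha$ be a finite measurable partition of $\Theta\times\mathcal{X}$ with diameter less than $\delta$. Then for every $y\in\mathcal{Y}$ and $n\ge1$, \[ \log\int\exp(g_n(\theta,x,y))\,dP_0\le H(P_n^y,\alpha_n)+L(P_n^y:P_0\mid\alpha_n)+\int g_n(\theta,x,y)\,dP_n^y(\theta,x)+\sum_{k=0}^{n-1}\rho_\delta(T^ky). \]
   Context: Observed system: $\mathcal{Y}$ is a complete separable metric space, $T$ is Borel, and $\nu$ is $T$-invariant and ergodic. Model system: $\mathcal{X}$ is a mixing shift of finite type with left shift $S$ and metric $d_{\mathcal{X}}(x,y)=2^{-\inf\{|m|:x_m\ne y_m\}}$. $\Theta$ is a compact metric space (metric $d_\Theta$), and $\Theta\times\mathcal{X}$ carries the metric $\max(d_\Theta,d_{\mathcal{X}})$. $\{\mu_\theta\}$ are the Gibbs measures of a regular family of Hölder potentials. Loss: $\ell:\Theta\times\mathcal{X}\times\mathcal{Y}\to\mathbb{R}$ is continuous with $\sup_{\theta,x}|\ell|\le\ell^*(y)\in L^1(\nu)$. For each $\delta>0$, $\rho_\delta:\mathcal{Y}\to(0,\infty)$ is measurable with $|\ell(\theta,x,y)-\ell(\theta',x',y)|\le\rho_\delta(y)$ whenever $\max(d_\Theta(\theta,\theta'),d_{\mathcal{X}}(x,x'))\le\delta$ (and $\int\rho_\delta d\nu\to0$ as $\delta\to0^+$). Set $g_n(\theta,x,y)=-\sum_{k<n}\ell(\theta,S^kx,T^ky)$. Prior and posterior: $\pi_0$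 is a fully supported probability on $\Theta$ and $P_0(E)=\int\int\mathbf{1}_E\,d\mu_\theta\,d\pi_0$. The posterior is $P_n^y(E)=\int_E e^{g_n(\theta,x,y)}dP_0\big/\int e^{g_n}dP_0$. Partitions: $R=I_\Theta\times S$ and $\alpha_n=\bigvee_{k=0}^{n-1}R^{-k}\alpha$. Also $H(\eta,\xi)=-\sum_{C\in\xi}\eta(C)\log\eta(C)$, and $L(\eta:\gamma\mid\xi)=\sum_{C\in\xi}\eta(C)\log\gamma(C)$ if $\gamma(C)=0\Rightarrow\eta(C)=0$ for all $C\in\xi$, and $-\infty$ otherwise ($0\log0=0$). *)

(* Defs.v *)
From HB Require Import structures.
From mathcomp Require Import all_boot all_order all_algebra.
From mathcomp Require Import all_classical all_reals all_analysis.
Set Implicit Arguments. Unset Strict Implicit. Unset Printing Implicit Defensive.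
Import Order.TTheory GRing.Theory Num.Theory.
Import numFieldNormedType.Exports.
Local Open Scope classical_set_scope.
Local Open Scope ring_scope.

Section MetricNotions.
Context {R : realType} {T : Type}.

Definition is_metric (d : T -> T -> R) : Prop :=
  [/\ (forall x y, 0 <= d x y), (forall x y, d x y = 0 <-> x = y),
      (forall x y, d x y = d y x) & (forall x y z, d x z <= d x y + d y z)].

Definition metric_opens (d : T -> T -> R) : set (set T) :=
  [set U | forall x, U x -> exists2 e : R, 0 < e & [set y | d x y < e] `<=` U].

(* sequential compactness (= compactness for metric spaces) *)
Definition metric_compact (d : T -> T -> R) : Prop :=
  forall u : nat -> T, exists (phi : nat -> nat) (t : T),
    (forall n, (phi n < phi n.+1)%N) /\ (fun n => d (u (phi n)) t) @ \oo --> (0 : R).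

Definition metric_complete (d : T -> T -> R) : Prop :=
  forall u : nat -> T,
    (forall e : R, 0 < e -> exists N, forall m n, (N <= m)%N -> (N <= n)%N -> d (u m) (u n) < e) ->
    exists t, (fun n => d (u n) t) @ \oo --> (0 : R).

Definition metric_separable (d : T -> T -> R) : Prop :=
  exists D : nat -> T, forall t (e : R), 0 < e -> exists n, d t (D n) < e.

Definition diam (d : T -> T -> R) (C : set T) : R :=
  sup ((fun z => d z.1 z.2) @` (C `*` C)).

End MetricNotions.

Definition borel_for {R : realType} {dsp} (T : measurableType dsp) (d : T -> T -> R) : Prop :=
  @measurable _ T = <<s metric_opens d >>.

Definition bisq (a : nat) := int -> 'I_a.+1.
HB.instance Definition _ a := Choice.on (bisq a).
HB.instance Definition _ a := isPointed.Build (bisq a) (fun _ => ord0).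

Definition cylinders (a : nat) : set (set (bisq a)) :=
  [set C | exists (I : seq int) (w : bisq a), C = [set x | forall m, m \in I -> x m = w m]].

(* full shift with the (Borel = cylinder) sigma-algebra *)
Definition seqZ (a : nat) := g_sigma_algebraType (@cylinders a).

Definition shift {a : nat} (x : seqZ a) : seqZ a := fun m => x (m + 1)%R.

Definition sft {a : nat} (A : 'I_a.+1 -> 'I_a.+1 -> bool) : set (seqZ a) :=
  [set x | forall m : int, A (x m) (x (m + 1)%R)].

(* topological mixing of S on X = sft A, using the cylinder base *)
Definition sft_mixing {a : nat} (A : 'I_a.+1 -> 'I_a.+1 -> bool) : Prop :=
  forall x y, sft A x -> sft A y -> forall k : nat, exists N : nat, forall n : nat, (N <= n)%N ->
    exists2 z, sft A z &
      (forall m : int, (`|m| <= k)%N -> z m = x m) /\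
      (forall m : int, (`|m| <= k)%N -> z (m + n%:Z)%R = y m).

(* d_X(x,y) = 2^{-inf{|m| : x_m <> y_m}}  (= 0 if x = y) *)
Definition dX {R : realType} {a : nat} (x y : seqZ a) : R :=
  sup [set (2^-1 : R) ^+ `|m|%N | m in [set m : int | x m != y m]].

Definition birkhoff {R : realType} {a : nat} (phi : seqZ a -> R) (n : nat) (x : seqZ a) : R :=
  \sum_(k < n) phi (iter k shift x).

Definition cyl {a : nat} (x : seqZ a) (n : nat) : set (seqZ a) :=
  [set z | forall k : nat, (k < n)%N -> z k%:Z = x k%:Z].

Definition is_gibbs {R : realType} {a : nat} (A : 'I_a.+1 -> 'I_a.+1 -> bool)
    (phi : seqZ a -> R) (mu : probability (seqZ a) R) : Prop :=
  [/\ mu (sft A) = 1%E,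
      (forall B, measurable B -> mu (shift @^-1` B) = mu B) &
      exists P C : R, 1 <= C /\
        forall x, sft A x -> forall n : nat, (0 < n)%N ->
          C^-1 <= fine (mu (cyl x n)) / expR (- n%:R * P + birkhoff phi n x) <= C].

Definition holder_on {R : realType} {a : nat} (A : 'I_a.+1 -> 'I_a.+1 -> bool)
    (phi : seqZ a -> R) (c beta : R) : Prop :=
  forall x y, sft A x -> sft A y -> `|phi x - phi y| <= c * (dX x y) `^ beta.

Definition regular_family {R : realType} {Th : Type} {a : nat} (dT : Th -> Th -> R)
    (A : 'I_a.+1 -> 'I_a.+1 -> bool) (phi : Th -> seqZ a -> R) : Prop :=
  (exists c beta : R, [/\ 0 < beta, beta <= 1 & forall th, holder_on A (phi th) c beta]) /\
  (forall th (e : R), 0 < e -> exists2 eta : R, 0 < eta &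
     forall th', dT th th' < eta -> forall x, sft A x -> `|phi th x - phi th' x| <= e).

Definition Rmap {Th : Type} {a : nat} (z : Th * seqZ a) : Th * seqZ a := (z.1, shift z.2).

Definition dprod {R : realType} {Th : Type} {a : nat} (dT : Th -> Th -> R)
    (z z' : Th * seqZ a) : R := Num.max (dT z.1 z'.1) (dX z.2 z'.2).

Definition gn {R : realType} {Th Y : Type} {a : nat} (ell : Th -> seqZ a -> Y -> R)
    (Tm : Y -> Y) (n : nat) (z : Th * seqZ a) (y : Y) : R :=
  - \sum_(k < n) ell z.1 (iter k shift z.2) (iter k Tm y).

(* cells of alpha_n = \/_{k<n} R^{-k} alpha, indexed by words w : 'I_n -> 'I_m *)
Definition join_cell {T : Type} {m : nat} (f : T -> T) (alpha : 'I_m -> set T) (n : nat)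
    (w : {ffun 'I_n -> 'I_m}) : set T :=
  [set z | forall k : 'I_n, alpha (w k) (iter k f z)].

(* H(eta, xi) = - sum_C eta(C) log eta(C)   (ln 0 = 0 in mathcomp, so 0 log 0 = 0) *)
Definition entropy {R : realType} {T : Type} {I : finType} (eta : set T -> \bar R)
    (xi : I -> set T) : R :=
  - \sum_(i : I) fine (eta (xi i)) * ln (fine (eta (xi i))).

Definition Lterm {R : realType} {T : Type} {I : finType} (eta gamma : set T -> \bar R)
    (xi : I -> set T) : \bar R :=
  if `[< forall i, gamma (xi i) = 0%E -> eta (xi i) = 0%E >]
  then (\sum_(i : I) fine (eta (xi i)) * ln (fine (gamma (xi i))))%:E
  else -oo%E.
Arguments join_cell {T m} f alpha n w.

(* Main.v *)
Require Import Defs.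
From HB Require Import structures.
From mathcomp Require Import all_boot all_order all_algebra.
From mathcomp Require Import all_classical all_reals all_analysis.
From mathcomp Require Import measurable_realfun.
From mathcomp Require Import lra.
Import Order.TTheory GRing.Theory Num.Theory.
Import numFieldNormedType.Exports.
Local Open Scope classical_set_scope.
Local Open Scope ring_scope.
Section Gen.
Context d (T : measurableType d) (R : realType).
Variable mu : {measure set T -> \bar R}.
Local Open Scope ereal_scope.
Import HBNNSimple.

Lemma int_mono (f1 f2 : T -> \bar R) : (forall x, 0 <= f1 x) ->
  (forall x, f1 x <= f2 x) -> \int[mu]_x f1 x <= \int[mu]_x f2 x.
Proof.
move=> f10 f12; have f20 x : 0 <= f2 x by apply: le_trans (f12 x).
rewrite !ge0_integralTE//; apply: ereal_sup_le => _ [h hf <-]; exists h => //= x.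
exact: le_trans (hf x) (f12 x).
Qed.

Lemma int_null (G : set T) (f : T -> \bar R) : measurable G -> mu (~` G) = 0 ->
  (forall x, 0 <= f x) -> \int[mu]_x f x <= \int[mu]_x (f \_ G) x.
Proof.
move=> mG G0 f0; rewrite [X in X <= _]ge0_integralTE//.
apply: ge_ereal_sup => _ [h hf <-].
rewrite -integralT_nnsfun.
have mh : measurable_fun [set: T] (fun x => ((h x : R)%:E : \bar R)).
  by apply/measurable_EFinP; exact: measurable_funPT.
have -> : \int[mu]_(x in [set: T]) (h x)%:E = \int[mu]_(x in G) (h x)%:E + \int[mu]_(x in ~` G) (h x)%:E.
  have dG : G `&` ~` G = set0 by rewrite setICr.
  by rewrite -(integral_setU _ mG (measurableC mG)) ?setUv; [reflexivity|exact: mh|exact/disj_set2P].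
rewrite (null_set_integral (measurableC mG)) ?adde0//; last exact: measurable_funS mh.
rewrite integral_mkcond; apply: int_mono => x; rewrite /patch; case: ifP => // _;
  by [rewrite lee_fin | exact: hf].
Qed.

Lemma indic_integrable (A : set T) : measurable A -> mu setT < +oo ->
  mu.-integrable setT (fun x => (\1_A x)%:E).
Proof.
move=> mA fin; apply/integrableP; split; first exact/measurable_EFinP.
rewrite (eq_integral (fun x => (\1_A x)%:E)); last first.
  by move=> t _; rewrite gee0_abs// lee_fin.
rewrite integral_indic// setIT.
by rewrite (@le_lt_trans _ _ (mu setT)) ?le_measure ?inE.
Qed.

Lemma int_simple (I : finType) (C : I -> set T) (c : I -> R) :
  (forall i, measurable (C i)) -> mu setT < +oo ->
  \int[mu]_x (\sum_i (c i)%:E * (\1_(C i) x)%:E) = \sum_i (c i)%:E * mu (C i).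
Proof.
move=> mC fin; rewrite integral_sum//; last first.
  by move=> i; apply: integrableZl => //; exact: indic_integrable.
apply: eq_bigr => i _; rewrite integralZl//; last exact: indic_integrable.
by rewrite integral_indic// setIT.
Qed.

Lemma sum_indic0 (I : finType) (C : I -> set T) (c : I -> R) z :
  (forall i, ~ C i z) -> \sum_i (c i)%:E * (\1_(C i) z)%:E = 0.
Proof. by move=> h; rewrite big1 // => i _; rewrite indicE memNset ?mule0 //; exact: h. Qed.

Lemma sum_indic1 (I : finType) (C : I -> set T) (c : I -> R) z w0 :
  C w0 z -> (forall i, C i z -> i = w0) ->
  \sum_i (c i)%:E * (\1_(C i) z)%:E = (c w0)%:E.
Proof.
move=> h0 hu; rewrite (bigD1 w0)//= big1 ?adde0.
  by rewrite indicE mem_set// mule1.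
move=> i ne; rewrite indicE memNset ?mule0// => Ci; move: ne; by rewrite (hu i Ci) eqxx.
Qed.

End Gen.
Section Seq.
Context (a : nat).

Lemma cyl_meas (I : seq int) (w : bisq a) :
  measurable ([set x : seqZ a | forall m, m \in I -> x m = w m]).
Proof. by apply: sub_sigma_algebra; exists I, w. Qed.

Lemma coord_meas (m : int) (i : 'I_a.+1) : measurable [set x : seqZ a | x m = i].
Proof.
have -> : [set x : seqZ a | x m = i] = [set x : seqZ a | forall j, j \in [:: m] -> x j = (fun _ => i) j].
  apply/seteqP; split => x /=; first by move=> h j; rewrite inE => /eqP ->.
  by move=> h; apply: h; rewrite inE.
exact: cyl_meas.
Qed.

Lemma shift_meas : measurable_fun setT (@Defs.shift a).
Proof.
apply: measurability; first reflexivity.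
move=> _ [C [I [w ->]] <-].
have -> : setT `&` Defs.shift @^-1` [set x : bisq a | forall m, m \in I -> x m = w m] =
  [set x : seqZ a | forall j, j \in map (fun m => m + 1)%R I -> x j = (fun j => w (j - 1)%R) j].
  apply/seteqP; split => x /=.
    move=> [_ h] j /mapP[m mI ->]; rewrite addrK; exact: h.
  move=> h; split => // m mI; rewrite /Defs.shift h ?addrK//; exact: map_f.
exact: cyl_meas.
Qed.

Lemma fin_cap_meas d (T : measurableType d) (I : finType) (F : I -> set T) :
  (forall k, measurable (F k)) -> measurable [set z | forall k, F k z].
Proof.
move=> mF.
suff H : forall s : seq I, measurable [set z | forall k, k \in s -> F k z].
  have -> : [set z | forall k, F k z] = [set z | forall k, k \in enum I -> F k z].
    by apply/seteqP; split => z /= h k; [move=> _|]; apply: h; rewrite ?mem_enum.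
  exact: H.
elim => [|k s ih].
  have -> : [set z | forall k0, k0 \in [::] -> F k0 z] = setT.
    by apply/seteqP; split => z //= _ j; rewrite in_nil.
  exact: measurableT.
have -> : [set z | forall j, j \in k :: s -> F j z] = F k `&` [set z | forall j, j \in s -> F j z].
  apply/seteqP; split => z /=.
    by move=> h; split; [apply: h; rewrite mem_head | move=> j js; apply: h; rewrite in_cons js orbT].
  by move=> [Fk h] j; rewrite in_cons => /orP[/eqP->|]//; exact: h.
exact: measurableI.
Qed.

Lemma fin_cup_meas d (T : measurableType d) (I : finType) (F : I -> set T) :
  (forall k, measurable (F k)) -> measurable [set z | exists k, F k z].
Proof.
move=> mF.
have -> : [set z | exists k, F k z] = ~` [set z | forall k, (~` F k) z].
  apply/seteqP; split => z /=.
    by move=> [k Fk] h; exact: (h k).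
  by move=> /existsNP [k] /= /contrapT; exists k.
apply: measurableC; apply: fin_cap_meas => k; exact: measurableC.
Qed.

Lemma sft_meas (A : 'I_a.+1 -> 'I_a.+1 -> bool) : measurable (sft A : set (seqZ a)).
Proof.
pose P (m : int) := [set x : seqZ a | A (x m) (x (m + 1)%R)].
have mP m : measurable (P m).
  pose F (ij : 'I_a.+1 * 'I_a.+1) :=
    if A ij.1 ij.2 then [set x : seqZ a | x m = ij.1] `&` [set x : seqZ a | x (m + 1)%R = ij.2] else set0.
  have -> : P m = [set z | exists k, F k z].
    apply/seteqP; split => x /=.
      by move=> h; exists (x m, x (m + 1)%R); rewrite /F /= h.
    by move=> [[i j]]; rewrite /F /=; case: ifP => // Aij [/= e1 e2]; move: Aij; rewrite -e1 -e2.
  apply: fin_cup_meas => -[i j]; rewrite /F /=; case: ifP => _ //.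
  by apply: measurableI; exact: coord_meas.
have -> : sft A = \bigcap_k (P (Posz k) `&` P (Negz k)).
  apply/seteqP; split => x /=.
    by move=> h k _; split; exact: h.
  by move=> h [k|k]; have [] := h k I.
by apply: bigcapT_measurable => k; exact: measurableI.
Qed.

Lemma sft_shift (A : 'I_a.+1 -> 'I_a.+1 -> bool) (x : seqZ a) : sft A x -> sft A (Defs.shift x).
Proof. by move=> h m; rewrite /Defs.shift; exact: h. Qed.

Lemma sft_iter (A : 'I_a.+1 -> 'I_a.+1 -> bool) (x : seqZ a) k : sft A x -> sft A (iter k Defs.shift x).
Proof. by move=> h; elim: k => //= k ih; exact: sft_shift. Qed.

End Seq.
Lemma dX_le1 (R : realType) a (x y : seqZ a) : @dX R a x y <= 1.
Proof.
rewrite /dX; set E := [set _ | _ in _].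
have [->|/set0P ne] := eqVneq E set0; first by rewrite sup0.
apply: ge_sup => // _ [k _ <-]; apply: exprn_ile1.
  by rewrite invr_ge0.
by rewrite invf_le1 ?ler1n.
Qed.

Lemma bounded_compact (R : realType) (T : Type) (d : T -> T -> R) :
  is_metric d -> metric_compact d -> exists B, forall x y, d x y <= B.
Proof.
move=> [d0 dE dS dtri] dc.
have [[t0 _]|nT] := pselect (exists t : T, True); last first.
  by exists 0 => x; exfalso; apply: nT; exists x.
suff [B hB] : exists B, forall x, d x t0 <= B.
  exists (B + B) => x y; apply: le_trans (dtri x t0 y) _; rewrite (dS t0 y); exact: lerD.
apply: contrapT => nB.
have H n : exists x, (n%:R : R) < d x t0.
  apply: contrapT => hn; apply: nB; exists n%:R => x; rewrite leNgt; apply/negP => h.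
  by apply: hn; exists x.
have [u hu] := choice H.
have [phi [t [phi_inc cv]]] := dc u.
have phige k : (k <= phi k)%N.
  elim: k => // k ih; exact: leq_ltn_trans ih (phi_inc k).
have /cvgrPdist_lt /(_ 1 ltr01) [N _ HN] := cv.
pose K := Num.bound (1 + d t t0).
pose k := maxn N K.
have h1 := HN k (leq_maxl _ _).
rewrite /= sub0r normrN ger0_norm ?d0 in h1.
have h2 := hu (phi k).
have h3 := dtri (u (phi k)) t t0.
have h4 : (1 + d t t0) < K%:R by apply: archi_boundP; rewrite addr_ge0 ?d0.
have h5 : (K%:R : R) <= (phi k)%:R by rewrite ler_nat (leq_trans (leq_maxr N K) (phige k)).
lra.
all: done.
Qed.

Lemma le_diam (R : realType) (T : Type) (d : T -> T -> R) (C : set T) B x y :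
  (forall x y, d x y <= B) -> C x -> C y -> d x y <= Defs.diam d C.
Proof.
move=> hB Cx Cy; apply: sup_upper_bound; last by exists (x, y).
split; first by exists (d x y); exists (x, y).
by exists B => _ [[u v] _ <-]; exact: hB.
Qed.

Lemma fin_between (R : realType) (x z : \bar R) :
  (0 <= x)%E -> (x <= z)%E -> z \is a fin_num -> x \is a fin_num.
Proof. by case: z => [z| |] //; case: x. Qed.

Theorem lemma7p4
  (R : realType)
  (* observed system: (Y, dY) complete separable metric, Borel sets, T Borel, nu invariant ergodic *)
  (dy : measure_display) (Y : measurableType dy) (dY : Y -> Y -> R)
  (HdY : is_metric dY) (HYc : metric_complete dY) (HYs : metric_separable dY)
  (HYb : borel_for dY)
  (Tm : Y -> Y) (HTm : measurable_fun setT Tm)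
  (nu : probability Y R)
  (Hinv : forall B, measurable B -> nu (Tm @^-1` B) = nu B)
  (Herg : forall B, measurable B -> Tm @^-1` B = B -> nu B = 0%E \/ nu B = 1%E)
  (* model system: mixing SFT X = sft A, compact metric parameter space Theta *)
  (a : nat) (A : 'I_a.+1 -> 'I_a.+1 -> bool) (HA : sft_mixing A)
  (dth : measure_display) (Th : measurableType dth) (dT : Th -> Th -> R)
  (HdT : is_metric dT) (HTc : metric_compact dT) (HTb : borel_for dT)
  (* Gibbs measures of a regular family of Hoelder potentials *)
  (phi : Th -> seqZ a -> R) (Hphi : regular_family dT A phi)
  (mu : Th -> probability (seqZ a) R) (Hmu : forall th, is_gibbs A (phi th) (mu th))
  (* loss *)
  (ell : Th -> seqZ a -> Y -> R)
  (Hcont : forall th x y, sft A x -> forall e : R, 0 < e -> exists2 eta : R, 0 < eta &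
     forall th' x' y', sft A x' -> dT th th' < eta -> dX x x' < eta -> dY y y' < eta ->
       `|ell th x y - ell th' x' y'| < e)
  (lstar : Y -> R) (Hlstar_m : measurable_fun setT lstar)
  (Hlstar_i : nu.-integrable setT (EFin \o lstar))
  (Hbound : forall th x y, sft A x -> `|ell th x y| <= lstar y)
  (rho : R -> Y -> R)
  (Hrho_m : forall d, 0 < d -> measurable_fun setT (rho d))
  (Hrho_pos : forall d, 0 < d -> forall y, 0 < rho d y)
  (Hrho : forall d, 0 < d -> forall th th' x x' y, sft A x -> sft A x' ->
      Num.max (dT th th') (dX x x') <= d -> `|ell th x y - ell th' x' y| <= rho d y)
  (Hrho_lim : (fun d => (\int[nu]_y (rho d y)%:E)%E) @ 0^'+ --> 0%E)
  (* prior *)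
  (pi0 : probability Th R)
  (Hpi0 : forall U, metric_opens dT U -> U !=set0 -> (0 < pi0 U)%E)
  (P0 : probability (Th * seqZ a)%type R)
  (HP0 : forall E, measurable E -> P0 E = (\int[pi0]_th mu th (xsection E th))%E)
  (* delta and the partition alpha of Theta x X *)
  (delta : R) (Hdelta : 0 < delta)
  (m : nat) (alpha : 'I_m -> set (Th * seqZ a)%type)
  (Halpha_m : forall i, measurable (alpha i))
  (Halpha_disj : forall i j, i != j -> alpha i `&` alpha j = set0)
  (Halpha_sub : forall i, alpha i `<=` setT `*` sft A)
  (Halpha_cov : forall z, (setT `*` sft A) z -> exists i, alpha i z)
  (Halpha_diam : \big[Num.max/0]_(i < m) diam (dprod dT) (alpha i) < delta) :
  forall (y : Y) (n : nat) (Pn : {measure set (Th * seqZ a)%type -> \bar R}),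
    (0 < n)%N ->
    (* Pn is the posterior P_n^y *)
    (forall E, measurable E ->
       Pn E = ((\int[P0]_(z in E) expR (gn ell Tm n z y)) /
               (\int[P0]_z expR (gn ell Tm n z y)))%:E) ->
    ((ln (\int[P0]_z expR (gn ell Tm n z y)))%:E
      <= (entropy Pn (join_cell Rmap alpha n))%:E
         + Lterm Pn P0 (join_cell Rmap alpha n)
         + (\int[Pn]_z (gn ell Tm n z y)%:E)
         + (\sum_(k < n) rho delta (iter k Tm y))%:E)%E.
Proof.
move=> y n Pn Hn HPn.
pose S := \sum_(k < n) rho delta (iter k Tm y).
pose cell := Defs.join_cell Rmap alpha n.
pose G := [set: Th] `*` sft A.
have S0 : 0 <= S by rewrite /S sumr_ge0 // => k _; exact/ltW/Hrho_pos.
have iterR k (z : (Th * seqZ a)%type) : iter k Rmap z = (z.1, iter k Defs.shift z.2).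
  by elim: k => [|k ih]; [case: z | rewrite iterS ih].
have mRmap : measurable_fun setT (@Rmap Th a).
  rewrite /Rmap; apply: measurable_fun_pair; first exact: measurable_fst.
  exact: measurableT_comp (shift_meas a) measurable_snd.
have miter k : measurable_fun setT (iter k (@Rmap Th a)).
  elim: k => [|k ih]; first exact: measurable_id.
  have -> : iter k.+1 (@Rmap Th a) = Rmap \o iter k Rmap by apply: funext.
  exact: measurableT_comp mRmap ih.
have mcell w : measurable (cell w).
  have := @fin_cap_meas _ _ _ (fun k : 'I_n => iter k Rmap @^-1` alpha (w k)).
  apply => k; rewrite -[X in measurable X]setTI; exact: miter k measurableT _ (Halpha_m _).
have mG : measurable G by apply: measurableX => //; exact: sft_meas.
have P0G : P0 (~` G) = 0%E.
  rewrite HP0; last exact: measurableC.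
  apply: integral0_eq => th _.
  have -> : xsection (~` G) th = ~` sft A.
    rewrite /xsection; apply/seteqP; split => x /=; rewrite in_setE /G /=.
      by move=> h sx; apply: h; split.
    by move=> h [_ sx]; exact: h sx.
  rewrite probability_setC; last exact: sft_meas.
  have [h1 _ _] := Hmu th.
  by rewrite [X in (_ - X)%E](_ : _ = 1%E) ?subee.
have CG w z : cell w z -> G z.
  by move=> h; have /= /Halpha_sub := h (Ordinal Hn).
have Cov z : G z -> exists w, cell w z.
  move=> [_ sz].
  have h (k : 'I_n) : exists i, alpha i (iter k Rmap z).
    by apply: Halpha_cov; rewrite iterR; split => //; exact: sft_iter.
  have [f hf] := fin_all_exists h.
  by exists [ffun k => f k] => k; rewrite ffunE; exact: hf.
have Disj w w' z : cell w z -> cell w' z -> w = w'.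
  move=> h h'; apply/ffunP => k; apply/eqP; apply: contraT => ne.
  have /seteqP[sub _] := Halpha_disj _ _ ne.
  by case: (sub _ (conj (h k) (h' k))).
have [Bt hBt] := @bounded_compact _ _ _ HdT HTc.
have Bd (z z' : (Th * seqZ a)%type) : dprod dT z z' <= Num.max Bt 1.
  by rewrite /dprod; apply: le_max2 => //; exact: dX_le1.
have Osc w z z' : cell w z -> cell w z' -> gn ell Tm n z' y <= gn ell Tm n z y + S.
  move=> h h'.
  have hk (k : 'I_n) : `|ell z.1 (iter k Defs.shift z.2) (iter k Tm y) -
      ell z'.1 (iter k Defs.shift z'.2) (iter k Tm y)| <= rho delta (iter k Tm y).
    apply: Hrho => //.
    - by have := Halpha_sub _ _ (h k); rewrite iterR => -[].
    - by have := Halpha_sub _ _ (h' k); rewrite iterR => -[].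
    - have := @le_diam _ _ _ _ _ _ _ Bd (h k) (h' k); rewrite /dprod !iterR /= => hd.
      apply/ltW; apply: le_lt_trans hd _; apply: le_lt_trans Halpha_diam.
      exact: le_bigmax.
  have : \sum_(k < n) (ell z.1 (iter k Defs.shift z.2) (iter k Tm y) -
      ell z'.1 (iter k Defs.shift z'.2) (iter k Tm y)) <= S.
    by apply: ler_sum => k _; exact: le_trans (ler_norm _) (hk k).
  rewrite sumrB /gn /S; lra.
pose M w := sup [set gn ell Tm n z y | z in cell w].
have Mb w z : cell w z -> gn ell Tm n z y <= M w /\ M w - S <= gn ell Tm n z y.
  move=> h; have ub : ubound [set gn ell Tm n z y | z in cell w] (gn ell Tm n z y + S).
    by move=> _ [z' h' <-]; exact: Osc h h'.
  split.
    apply: sup_upper_bound; last by exists z.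
    by split; [exists (gn ell Tm n z y); exists z | exists (gn ell Tm n z y + S)].
  have : M w <= gn ell Tm n z y + S by apply: ge_sup => //; exists (gn ell Tm n z y); exists z.
  lra.

rewrite /Rintegral in HPn *.
set Zb := integral P0 setT _ in HPn *.
have Zb0 : (0 <= Zb)%E by apply: integral_ge0 => z _; rewrite lee_fin expR_ge0.
have [Z0|Zpos] : fine Zb = 0 \/ 0 < fine Zb.
  by move: (fine_ge0 Zb0); rewrite le_eqVlt => /orP[/eqP <-|]; [left|right].
  have Pn0 E : measurable E -> Pn E = 0%E by move=> mE; rewrite HPn // Z0 invr0 mulr0.
  have PnT0 : Pn (~` set0) = 0%E by rewrite setC0 Pn0.
  have hz f : (forall x, 0 <= f x)%E -> (\int[Pn]_x f x = 0)%E.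
    move=> f0; apply/eqP; rewrite eq_le integral_ge0 ?andbT //.
    apply: le_trans (@int_null _ _ _ Pn set0 f measurable0 PnT0 f0) _.
    by rewrite -integral_mkcond integral_set0.
  have J0 : (\int[Pn]_z (gn ell Tm n z y)%:E = 0)%E.
    rewrite integralE [X in (X - _)%E]hz; last by move=> x; exact: funepos_ge0.
    by rewrite hz ?sube0 // => x; exact: funeneg_ge0.
  have E0 : Defs.entropy Pn (join_cell Rmap alpha n) = 0.
    by rewrite /Defs.entropy big1 ?oppr0 // => w _; rewrite (Pn0 _ (mcell w)) /= mul0r.
  have L0 : Defs.Lterm Pn P0 (join_cell Rmap alpha n) = 0%:E.
    rewrite /Defs.Lterm asboolT; last by move=> w _; exact: Pn0 _ (mcell w).
    by rewrite big1 // => w _; rewrite (Pn0 _ (mcell w)) /= mul0r.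
  rewrite J0 Z0 E0 L0 !adde0 add0e lee_fin.
  exact: le_trans (ln_le0 ler01) S0.
have Zfin : Zb \is a fin_num.
  by rewrite fin_numE; apply/andP; split; apply/eqP => e; move: Zpos; rewrite e /= ltxx.
set Z := fine Zb in HPn Zpos *.
have ZneqO : Z != 0 by rewrite gt_eqF.
have Ib E : measurable E ->
    0 <= fine (\int[P0]_(x in E) (expR (gn ell Tm n x y))%:E)%E /\
    (\int[P0]_(x in E) (expR (gn ell Tm n x y))%:E)%E =
      (fine (\int[P0]_(x in E) (expR (gn ell Tm n x y))%:E)%E)%:E.
  move=> mE.
  have i0 : (0 <= \int[P0]_(x in E) (expR (gn ell Tm n x y))%:E)%E.
    by apply: integral_ge0 => z _; rewrite lee_fin expR_ge0.
  have iZ : (\int[P0]_(x in E) (expR (gn ell Tm n x y))%:E <= Zb)%E.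
    rewrite integral_mkcond; apply: int_mono => x.
      by rewrite /patch; case: ifP => // _; rewrite lee_fin expR_ge0.
    by rewrite /patch; case: ifP => // _; rewrite lee_fin expR_ge0.
  split; first exact: fine_ge0.
  by rewrite fineK //; exact: fin_between i0 iZ Zfin.
have PnT : Pn setT = 1%E by rewrite HPn // -/Zb -/Z divff.
have PnC : Pn (~` G) = 0%E.
  have h : (\int[P0]_(x in ~` G) (expR (gn ell Tm n x y))%:E = 0)%E.
    apply/eqP; rewrite eq_le integral_ge0 ?andbT; last by move=> x _; rewrite lee_fin expR_ge0.
    rewrite integral_mkcond.
    apply: le_trans (@int_null _ _ _ P0 G _ mG P0G _) _.
      by move=> x; rewrite /patch; case: ifP => // _; rewrite lee_fin expR_ge0.
    rewrite le_eqVlt; apply/orP; left; apply/eqP; apply: integral0_eq => x _.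
    rewrite /patch; case: ifPn => // /set_mem xG; case: ifPn => // /set_mem nxG.
    by case: (nxG xG).
  by rewrite HPn; [rewrite h /= mul0r | exact: measurableC].
have PnG : Pn G = 1%E.
  have h : Pn (G `|` ~` G) = (Pn G + Pn (~` G))%E := measureU Pn mG (measurableC mG) (setICr G).
  have h1 : Pn (G `|` ~` G) = 1%E by rewrite setUv; exact: PnT.
  by rewrite -h1 h PnC adde0.
have PnF : (Pn setT < +oo)%E by rewrite PnT ltry.
pose p w := fine (\int[P0]_(x in cell w) (expR (gn ell Tm n x y))%:E)%E / Z.
have Pcell w : Pn (cell w) = (p w)%:E by rewrite HPn.
have p0 w : 0 <= p w by rewrite /p divr_ge0 ?(Ib _ (mcell w)).1 // ltW.
pose q w := fine (P0 (cell w)).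
have P0cell w : P0 (cell w) = (q w)%:E by rewrite /q fineK // fin_num_measure.
have q0 w : 0 <= q w by rewrite /q fine_ge0.
have Iw w : p w * Z <= q w * expR (M w).
  have : (\int[P0]_(x in cell w) (expR (gn ell Tm n x y))%:E <= (expR (M w))%:E * P0 (cell w))%E.
    have ic := @integral_cst _ _ _ P0 _ (mcell w) ((expR (M w))%:E).
    rewrite -ic [X in (X <= _)%E]integral_mkcond [X in (_ <= X)%E]integral_mkcond.
    apply: int_mono => x.
      by rewrite /patch; case: ifP => // _; rewrite lee_fin expR_ge0.
    rewrite /patch; case: ifPn => // /set_mem h.
    by rewrite /= lee_fin ler_expR; exact: (Mb w x h).1.
  rewrite (Ib _ (mcell w)).2 P0cell -EFinM lee_fin.
  by rewrite /p divfK // mulrC.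

have ind z : G z -> exists2 w0, cell w0 z & forall i, cell i z -> i = w0.
  move=> Gz; have [w0 h0] := Cov z Gz; exists w0 => // i hi; exact: Disj _ _ _ hi h0.
have sump : \sum_w p w = 1.
  have := @int_simple _ _ _ Pn _ cell (fun _ => 1) mcell PnF.
  rewrite (eq_integral (fun z => (\1_G z)%:E)); last first.
    move=> z _; have [Gz|nGz] := pselect (G z).
      have [w0 h0 hu] := ind z Gz.
      by rewrite (@sum_indic1 _ _ _ _ cell (fun _ => 1) z w0 h0 hu) indicE mem_set.
    rewrite (@sum_indic0 _ _ _ _ cell (fun _ => 1) z); first by rewrite indicE memNset.
    by move=> w hw; exact: nGz (CG _ _ hw).
  rewrite integral_indic // setIT PnG.
  under eq_bigr => w _ do rewrite Pcell mul1e.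
  rewrite sumEFin => h; apply/esym; exact: (EFin_inj h).
pose s z := \sum_w ((M w - S)%:E * (\1_(cell w) z)%:E)%E.
have sG z : G z -> (s z <= (gn ell Tm n z y)%:E)%E.
  move=> Gz; have [w0 h0 hu] := ind z Gz.
  rewrite /s (@sum_indic1 _ _ _ _ cell (fun w => M w - S) z w0 h0 hu) lee_fin.
  exact: (Mb w0 z h0).2.
have snG z : ~ G z -> s z = 0%E.
  move=> nGz; rewrite /s (@sum_indic0 _ _ _ _ cell (fun w => M w - S) z) //.
  by move=> w hw; exact: nGz (CG _ _ hw).
have Js : (\int[Pn]_z s z = (\sum_w p w * (M w - S))%:E)%E.
  rewrite /s (@int_simple _ _ _ Pn _ cell (fun w => M w - S) mcell PnF) -sumEFin.
  by apply: eq_bigr => w _; rewrite Pcell -EFinM mulrC.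
have J : ((\sum_w p w * (M w - S))%:E <= \int[Pn]_z (gn ell Tm n z y)%:E)%E.
  rewrite -Js [X in (X <= _)%E]integralE [X in (_ <= X)%E]integralE; apply: leeB.
    apply: int_mono => z; first exact: funepos_ge0.
    rewrite !funeposE ge_max; apply/andP; split; last by rewrite le_max lexx orbT.
    have [Gz|nGz] := pselect (G z); first by rewrite le_max (sG z Gz).
    by rewrite snG // le_max lexx orbT.
  apply: le_trans (@int_null _ _ _ Pn G _ mG PnC (fun z => funeneg_ge0 _ z)) _.
  apply: int_mono => z.
    by rewrite /patch; case: ifP => // _; exact: funeneg_ge0.
  rewrite /patch; case: ifPn => [/set_mem Gz|_]; last exact: funeneg_ge0.
  rewrite !funenegE; apply: le_max2 => //; rewrite leeN2; exact: sG.
have Lcond w : P0 (cell w) = 0%E -> Pn (cell w) = 0%E.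
  move=> h; rewrite Pcell; congr EFin.
  have := Iw w; rewrite /q h /= mul0r => hle.
  apply/eqP; rewrite eq_le (p0 w) andbT.
  have := p0 w; nra.
rewrite /Defs.entropy /Defs.Lterm asboolT; last exact: Lcond.
have Hs : \sum_w fine (Pn (cell w)) * ln (fine (Pn (cell w))) = \sum_w p w * ln (p w).
  by apply: eq_bigr => w _; rewrite Pcell.
have Ls : \sum_w fine (Pn (cell w)) * ln (fine (P0 (cell w))) = \sum_w p w * ln (q w).
  by apply: eq_bigr => w _; rewrite Pcell.
rewrite Hs Ls.
apply: le_trans (leeD2r _ (leeD2l _ J)).
rewrite -!EFinD lee_fin.
have key w : p w * ln Z <= - (p w * ln (p w)) + p w * ln (q w) + p w * M w.
  have := p0 w; rewrite le_eqVlt => /orP[/eqP <-|pp].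
    by rewrite !mul0r oppr0 !addr0.
  have hA := Iw w.
  have qpos : 0 < q w.
    rewrite lt_neqAle q0 andbT; apply/eqP => q0'; move: hA; rewrite -q0' mul0r => hA.
    have : 0 < p w * Z := mulr_gt0 pp Zpos.
    lra.
  have hl : ln (p w * Z) <= ln (q w * expR (M w)).
    by rewrite ler_ln ?posrE ?(mulr_gt0 pp Zpos) ?(mulr_gt0 qpos (expR_gt0 _)).
  have e1 : ln (p w * Z) = ln (p w) + ln Z by rewrite lnM // posrE.
  have e2 : ln (q w * expR (M w)) = ln (q w) + M w.
    by rewrite lnM ?posrE ?expR_gt0 // expRK.
  rewrite e1 e2 in hl.
  nra.
have sumk : \sum_w p w * ln Z <= \sum_w (- (p w * ln (p w)) + p w * ln (q w) + p w * M w).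
  by apply: ler_sum => w _; exact: key w.
rewrite -mulr_suml sump mul1r !big_split /= sumrN in sumk.
have e : \sum_w p w * (M w - S) = \sum_w p w * M w - S.
  rewrite (eq_bigr (fun w => p w * M w - p w * S)); last by move=> w _; rewrite mulrBr.
  by rewrite sumrB -mulr_suml sump mul1r.
rewrite e -/S; lra.
Qed.
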